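(* Let $J\in\mathbb{Z}_{>0}$ be not of the form $J = 3^k\prod_i p_i^{l_i}\prod_j q_j^{2m_j}$ (with $k,l_i,m_j\in\mathbb{Z}_{\ge0}$, primes $p_i\equiv1\pmod 3$, primes $q_j\equiv -1\pmod 3$), and suppose $J$ satisfies one of: (1) $J$ is a prime; (2) $J=pq$ where $p,q$ are odd primes with $q>3p$; (3) $J=2p$ where $p$ is an odd prime. Then $\Lambda_h$ has no well-rounded sublattice of index $J$.
   Context: $\Lambda_h = \begin{bmatrix} 1 & -1/2 \\ 0 & \sqrt3/2\end{bmatrix}\mathbb{Z}^2$. A full-rank lattice in $\mathbb{R}^2$ is well-rounded if it has a basis consisting of vectors of minimal nonzero Euclidean norm. The index of a full-rank sublattice $\Gamma\subseteq\Lambda_h$ is $|\Lambda_h:\Gamma|=\det\Gamma/\det\Lambda_h$. *)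

(* Defs.v *)
From HB Require Import structures.
From mathcomp Require Import all_boot all_order all_algebra.
From mathcomp Require Import reals.
Set Implicit Arguments. Unset Strict Implicit. Unset Printing Implicit Defensive.
Import Order.TTheory GRing.Theory Num.Theory.
Local Open Scope ring_scope.

Section Lattices.
Variable R : realType.

Definition vnorm (z : R * R) : R := Num.sqrt (z.1 ^+ 2 + z.2 ^+ 2).
Definition det2 (u v : R * R) : R := u.1 * v.2 - u.2 * v.1.

Definition lat (u v : R * R) (z : R * R) : Prop :=
  exists m n : int, z = (m%:~R * u.1 + n%:~R * v.1, m%:~R * u.2 + n%:~R * v.2).

Definition is_basis (L : R * R -> Prop) (u v : R * R) : Prop :=
  det2 u v != 0 /\ forall z, L z <-> lat u v z.

Definition full_rank_lattice (L : R * R -> Prop) : Prop :=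
  exists u v, is_basis L u v.

(* columns of [[1, -1/2], [0, sqrt 3 / 2]] *)
Definition hb1 : R * R := (1, 0).
Definition hb2 : R * R := (- (1 / 2), Num.sqrt 3 / 2).
Definition Lambda_h : R * R -> Prop := lat hb1 hb2.

Definition sublattice_h (L : R * R -> Prop) : Prop :=
  full_rank_lattice L /\ forall z, L z -> Lambda_h z.

(* |Lambda_h : L| = det L / det Lambda_h = J; det of a lattice is |det| of any basis *)
Definition has_index_h (L : R * R -> Prop) (J : nat) : Prop :=
  exists u v, is_basis L u v /\ `|det2 u v| = J%:R * `|det2 hb1 hb2|.

Definition well_rounded (L : R * R -> Prop) : Prop :=
  exists x y, is_basis L x y /\ vnorm x = vnorm y /\
    forall z, L z -> z != (0, 0) -> vnorm x <= vnorm z.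
End Lattices.

Definition special_form (J : nat) : Prop :=
  exists (k : nat) (ps qs : seq (nat * nat)),
    all (fun x => prime x.1 && (x.1 %% 3 == 1)%N) ps /\
    all (fun x => prime x.1 && (x.1 %% 3 == 2)%N) qs /\
    J = (3 ^ k * (\prod_(x <- ps) x.1 ^ x.2) * (\prod_(x <- qs) x.1 ^ (2 * x.2)))%N.

(* Main.v *)
Require Import Defs.
From HB Require Import structures.
From mathcomp Require Import all_boot all_order all_algebra.
From mathcomp Require Import reals.
From mathcomp Require Import all_field zify ring lra.
Import Order.TTheory GRing.Theory Num.Theory.


Lemma lemR (r s n t : nat) : prime r -> 0 < s -> 9 * s ^ 2 < r ^ 2 ->
  4 * n ^ 2 = t ^ 2 + 3 * r ^ 2 * s ^ 2 -> t <= n ->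
  exists n1 t1, [/\ n = r * n1, t = r * t1, 4 * n1 ^ 2 = t1 ^ 2 + 3 * s ^ 2 & t1 <= n1].
Proof.
move=> pr s0 hrs he htn.
have r4 : 4 < r.
  have r2 := prime_gt1 pr.
  have : r != 4 by apply/eqP => E; rewrite E in pr.
  move=> /eqP ?.
  have : 3 < r.
    case: (leqP r 3) => // h. have : r ^ 2 <= 9 by nia. nia.
  lia.
have rn : r %| n.
  apply/negPn/negP => nrn.
  set A := 2 * n - t; set B := 2 * n + t.
  have hA : A + t = 2 * n by rewrite /A; lia.
  have hB : B = A + 2 * t by rewrite /B; lia.
  have hAB : A * B = 3 * r ^ 2 * s ^ 2.
    have e2 : 4 * n ^ 2 = (A + t) ^ 2 by rewrite hA; ring.
    rewrite hB; move: he; rewrite e2; nia.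
  clearbody A B.
  have r2AB : r ^ 2 %| A * B by rewrite hAB dvdn_mulr // dvdn_mull.
  have rAB : r %| A * B by apply: dvdn_trans r2AB; rewrite expnS dvdn_mulr.
  rewrite Euclid_dvdM // in rAB.
  case rA: (r %| A); case rB: (r %| B).
  - have : r %| A + B by rewrite dvdn_add.
    have -> : A + B = 4 * n by lia.
    rewrite Euclid_dvdM // (negPf nrn) orbF => /dvdn_leq; lia.
  - have cB : coprime (r ^ 2) B by apply: coprimeXl; rewrite prime_coprime // rB.
    rewrite Gauss_dvdl // in r2AB.
    have [k hk] := dvdnP r2AB.
    have k0 : 0 < k.
      case: k hk => // hk. have : A * B = 0 by rewrite hk. lia.
    have Ar : r ^ 2 <= A by rewrite hk leq_pmull.
    have Br : r ^ 2 <= B by lia.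
    have := leq_mul Ar Br; rewrite hAB -mulnA [_ * (r ^ 2 * _)]mulnCA leq_pmul2l; last by rewrite expn_gt0 prime_gt0.
    lia.
  - have cA : coprime (r ^ 2) A by apply: coprimeXl; rewrite prime_coprime // rA.
    rewrite Gauss_dvdr // in r2AB.
    have [k hk] := dvdnP r2AB.
    have k0 : 0 < k.
      case: k hk => // hk. have : A * B = 0 by rewrite hk muln0. lia.
    have B3 : B <= 3 * A by lia.
    have Br : r ^ 2 <= B by rewrite hk leq_pmull.
    have := leq_mul Br (leq_trans Br B3).
    have -> : B * (3 * A) = r ^ 2 * (9 * s ^ 2).
      by rewrite mulnCA [B * A]mulnC hAB; ring.
    rewrite leq_pmul2l; last by rewrite expn_gt0 prime_gt0.
    lia.
  - by rewrite rA rB in rAB.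
have [n1 hn1] := dvdnP rn.
have rt : r %| t.
  have : r %| t ^ 2.
    have -> : t ^ 2 = r * (r * (4 * n1 ^ 2 - 3 * s ^ 2)) by nia.
    exact: dvdn_mulr.
  by rewrite Euclid_dvdX // => /andP[].
have [t1 ht1] := dvdnP rt.
have r0 : 0 < r by apply: prime_gt0.
exists n1, t1; split; first by rewrite hn1 mulnC.
- by rewrite ht1 mulnC.
- rewrite hn1 ht1 in he.
  have : r ^ 2 * (4 * n1 ^ 2) = r ^ 2 * (t1 ^ 2 + 3 * s ^ 2).
    rewrite mulnDr; move: he; rewrite !expnMn; lia.
  by move/eqP; rewrite eqn_pmul2l ?expn_gt0 ?r0 // => /eqP.
- by move: htn; rewrite hn1 ht1 leq_pmul2r.
Qed.

Lemma bnd (n t M : nat) : 4 * n ^ 2 = t ^ 2 + 3 * M -> t <= n ->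
  n ^ 2 <= M /\ 3 * M <= 4 * n ^ 2.
Proof. move=> he htn; have : t ^ 2 <= n ^ 2 by rewrite leq_exp2r. lia. Qed.

Arguments bnd {n t M}.

Lemma lemP (p n t : nat) : prime p -> 4 * n ^ 2 = t ^ 2 + 3 * p ^ 2 -> t <= n -> n = p.
Proof.
move=> pr he htn.
case: (leqP p 3) => hp.
  have [h1 h2] := bnd he htn.
  have p2 := prime_gt1 pr.
  have : n <= p by rewrite -(leq_exp2r _ _ (isT : 0 < 2)).
  have : p ^ 2 <= 3 ^ 2 by rewrite leq_exp2r.
  nia.
have [n1 [t1 [-> _ e1 l1]]] : exists n1 t1, [/\ n = p * n1, t = p * t1, 4 * n1 ^ 2 = t1 ^ 2 + 3 * 1 ^ 2 & t1 <= n1].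
  apply: lemR => //; first by rewrite exp1n; nia.
  by rewrite exp1n muln1.
have [h1 h2] := bnd e1 l1.
rewrite exp1n in h1 h2.
have : n1 = 1 by nia.
by move=> ->; rewrite muln1.
Qed.

Lemma lemQ (p q n t : nat) : prime p -> prime q -> 3 * p < q ->
  4 * n ^ 2 = t ^ 2 + 3 * (p * q) ^ 2 -> t <= n -> n = p * q.
Proof.
move=> pp pq hpq he htn.
have p0 := prime_gt0 pp.
have h1 : 9 * p ^ 2 < q ^ 2 by nia.
have h2 : 4 * n ^ 2 = t ^ 2 + 3 * q ^ 2 * p ^ 2 by rewrite he expnMn; ring.
have [n1 [t1 [-> _ e1 l1]]] := lemR q p n t pq p0 h1 h2 htn.
by rewrite (lemP p n1 t1 pp e1 l1) mulnC.
Qed.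

Lemma lem2P (p n t : nat) : prime p -> odd p ->
  4 * n ^ 2 = t ^ 2 + 3 * (2 * p) ^ 2 -> t <= n -> n = 2 * p.
Proof.
move=> pp op he htn.
case: (leqP p 6) => hp.
  have [h1 h2] := bnd he htn.
  have p2 := prime_gt1 pp.
  have : n <= 2 * p by rewrite -(leq_exp2r _ _ (isT : 0 < 2)).
  have hpc : (p == 3) || (p == 5).
    move: pp op; case: p hp {he h1 h2 p2} => [|[|[|[|[|[|[|]]]]]]] //.
  case/orP: hpc => /eqP E; subst p.
    nia.
  have [h|h] : n <= 9 \/ 10 <= n by lia.
    have : 9 <= n by nia.
    move=> h9; have E9 : n = 9 by lia.
    rewrite E9 in he.
    have [h'|h'] : t <= 4 \/ 5 <= t by lia.
      have : t ^ 2 <= 4 ^ 2 by rewrite leq_exp2r. lia.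
    have : 5 ^ 2 <= t ^ 2 by rewrite leq_exp2r. lia.
  lia.
have h1 : 9 * 2 ^ 2 < p ^ 2 by nia.
have h2 : 4 * n ^ 2 = t ^ 2 + 3 * p ^ 2 * 2 ^ 2 by rewrite he expnMn; ring.
have [n1 [t1 [-> _ e1 l1]]] := lemR p 2 n t pp (isT : 0 < 2) h1 h2 htn.
by rewrite (lemP 2 n1 t1 (isT : prime 2) e1 l1) mulnC.
Qed.

Lemma mod3 (x : nat) : prime x -> x != 3 -> (x %% 3 = 1) \/ (x %% 3 = 2).
Proof.
move=> px x3.
have : x %% 3 < 3 by rewrite ltn_mod.
have : ~~ (3 %| x).
  apply/negP => /(@prime_nt_dvdP 3 x px isT) E; by rewrite -E in x3.
rewrite /dvdn; lia.
Qed.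



Lemma choose_r (J : nat) : (0 < J) -> ~ special_form J ->
  (prime J \/
   (exists p q : nat, [/\ prime p, prime q, odd p && odd q, (3 * p < q)%N & J = (p * q)%N]) \/
   (exists p : nat, [/\ prime p, odd p & J = (2 * p)%N])) ->
  exists r, [/\ prime r, (r %% 3 = 2)%N, (r %| J)%N & ~~ (r ^ 2 %| J)%N].
Proof.
move=> J0 nsp [pJ|[[p [q [pp pq opq hpq EJ]]]|[p [pp op EJ]]]].
- have nsq : ~~ (J ^ 2 %| J).
    apply/negP => /dvdn_leq => /(_ J0); have := prime_gt1 pJ; nia.
  case: (eqVneq J 3) => [E|J3].
    exfalso; apply: nsp; exists 1, [::], [::]; split; [|split] => //; by rewrite E !big_nil.
  case: (mod3 J pJ J3) => h.
    exfalso; apply: nsp; exists 0, [:: (J, 1)], [::]; split; [|split] => //=.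
      by rewrite pJ h.
    by rewrite big_cons !big_nil /=; lia.
  by exists J; split.
- have q3 : q != 3 by apply/eqP => E; have := prime_gt1 pp; lia.
  have pqn : p != q by apply/eqP => E; lia.
  case: (mod3 q pq q3) => hq; last first.
    exists q; split => //; first by rewrite EJ dvdn_mull.
    rewrite EJ expnS expn1 (dvdn_pmul2r (prime_gt0 pq)).
    apply/negP => /(prime_nt_dvdP pp) h.
    have : q != 1 by apply/eqP => E; rewrite E in pq.
    by move/h => E; rewrite E eqxx in pqn.
  case: (eqVneq p 3) => [E|p3].
    exfalso; apply: nsp; exists 1, [:: (q, 1)], [::]; split; [|split] => //=.
      by rewrite pq hq.
    by rewrite big_cons !big_nil EJ E /=; lia.
  case: (mod3 p pp p3) => hp.
    exfalso; apply: nsp; exists 0, [:: (p, 1); (q, 1)], [::]; split; [|split] => //=.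
      by rewrite pq hq pp hp.
    by rewrite !big_cons !big_nil EJ /=; lia.
  exists p; split => //; first by rewrite EJ dvdn_mulr.
  rewrite EJ expnS expn1 (dvdn_pmul2l (prime_gt0 pp)).
  apply/negP => /(prime_nt_dvdP pq) h.
  have : p != 1 by apply/eqP => E; rewrite E in pp.
  by move/h => E; rewrite E eqxx in pqn.
- exists 2; split => //; first by rewrite EJ dvdn_mulr.
  rewrite EJ expnS expn1 (dvdn_pmul2l (isT : 0 < 2)).
  by rewrite dvdn2 op.
Qed.

Local Open Scope ring_scope.

Lemma normF (r : nat) (a b : int) : prime r -> (r %% 3 = 2)%N ->
  (r %| a ^+ 2 - a * b + b ^+ 2)%Z -> (r %| a)%Z /\ (r %| b)%Z.
Proof.
move=> pr r3 hd.
have ch := pchar_Fp pr.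
rewrite !(dvdz_pcharf ch) in hd *.
set A : 'F_r := a%:~R; set B : 'F_r := b%:~R.
have hAB : A ^+ 2 - A * B + B ^+ 2 = 0.
  have -> : A ^+ 2 - A * B + B ^+ 2 = (a ^+ 2 - a * b + b ^+ 2)%:~R by rewrite /A /B; ring.
  exact/eqP.
have B0 : B = 0.
  apply/eqP/negP => /negP Bn0.
  set u := A / B.
  have hu : u ^+ 2 - u + 1 = 0.
    have : (A ^+ 2 - A * B + B ^+ 2) / B ^+ 2 = 0 by rewrite hAB mul0r.
    rewrite /u => <-; field; exact: Bn0.
  have u3 : u ^+ 3 = -1.
    have : (u + 1) * (u ^+ 2 - u + 1) = 0 by rewrite hu mulr0.
    move=> h; apply/eqP; rewrite -subr_eq0 opprK; apply/eqP; rewrite -h; ring.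
  have uc := expf_card u.
  have er : #|'F_r| = (r %/ 3 * 3 + 2)%N.
    by rewrite card_Fp // {1}(divn_eq r 3) r3.
  rewrite er exprD mulnC exprM u3 in uc.
  have u0 : u != 0 by apply/eqP => E; move: hu; rewrite E expr0n /= subr0 add0r => /eqP; rewrite oner_eq0.
  have three : (3%:R : 'F_r) != 0.
    rewrite -(dvdn_pcharf ch); apply/negP.
    have r1 : r != 1%N by apply/eqP => E; rewrite E in pr.
    by move=> /(prime_nt_dvdP (isT : prime 3) r1) E; rewrite E in r3.
  move: uc; rewrite -signr_odd; case: (odd _); rewrite ?expr0 ?expr1 => uc.
  -
    have e : u ^+ 2 + u = 0 by rewrite -{2}uc; ring.
    have : u * (u + 1) = 0 by rewrite -e; ring.
    move/eqP; rewrite mulf_eq0 (negPf u0) /= addr_eq0 => /eqP E.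
    have : (3%:R : 'F_r) = 0 by rewrite -hu E; ring.
    by move/eqP; rewrite (negPf three).
  - have e : u ^+ 2 - u = 0 by rewrite -{2}uc; ring.
    have : u * (u - 1) = 0 by rewrite -e; ring.
    move/eqP; rewrite mulf_eq0 (negPf u0) /= subr_eq0 => /eqP E.
    by move: hu; rewrite E expr1n subrr add0r => /eqP; rewrite oner_eq0.
have A0 : A = 0.
  apply/eqP; rewrite -[A == 0]andTb -(expf_eq0 A 2); apply/eqP; move: hAB; rewrite B0 mulr0 subr0 expr0n addr0; exact: id.
by rewrite A0 B0 eqxx.
Qed.

Lemma div_sq (r J : nat) (a b : int) : prime r -> (r %% 3 = 2)%N ->
  a ^+ 2 - a * b + b ^+ 2 = J%:Z -> (r %| J)%N -> (r ^ 2 %| J)%N.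
Proof.
move=> pr r3 hN rJ.
have [ra rb] : (r %| a)%Z /\ (r %| b)%Z.
  by apply: normF => //; rewrite hN dvdzE.
have [a1 ea] := dvdzP ra; have [b1 eb] := dvdzP rb.
rewrite ea eb in hN.
have : ((r ^ 2)%:Z %| J%:Z)%Z.
  rewrite -hN; have -> : (a1 * r) ^+ 2 - a1 * r * (b1 * r) + (b1 * r) ^+ 2 = (a1 ^+ 2 - a1 * b1 + b1 ^+ 2) * (r ^ 2)%:Z.
    by rewrite PoszM; ring.
  exact: dvdz_mull.
by rewrite dvdzE.
Qed.

Lemma core (J : nat) (a b e f : int) :
  (0 < J)%N -> ~ special_form J ->
  (prime J \/
   (exists p q : nat, [/\ prime p, prime q, odd p && odd q, (3 * p < q)%N & J = (p * q)%N]) \/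
   (exists p : nat, [/\ prime p, odd p & J = (2 * p)%N])) ->
  a ^+ 2 - a * b + b ^+ 2 = e ^+ 2 - e * f + f ^+ 2 ->
  `|a * f - b * e| = J%:Z ->
  2 * a * e - a * f - b * e + 2 * b * f <= a ^+ 2 - a * b + b ^+ 2 ->
  - (2 * a * e - a * f - b * e + 2 * b * f) <= a ^+ 2 - a * b + b ^+ 2 -> False.
Proof.
move=> J0 nsp hJ hN hD h1 h2.
set n := a ^+ 2 - a * b + b ^+ 2 in hN h1 h2.
set T := 2 * a * e - a * f - b * e + 2 * b * f in h1 h2.
set D := a * f - b * e in hD.
have id4 : 4 * n ^+ 2 = T ^+ 2 + 3 * D ^+ 2.
  have -> : 4 * n ^+ 2 = 4 * n * (e ^+ 2 - e * f + f ^+ 2) by rewrite -hN; ring.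
  by rewrite /n /T /D; ring.
have En0 : n = a ^+ 2 - a * b + b ^+ 2 by [].
clearbody n T D.
have n0 : 0 <= n by clear -h1 h2; lia.
have heq : (4 * `|n| ^ 2 = `|T| ^ 2 + 3 * J ^ 2)%N.
  have En : n = (`|n|%N)%:Z by rewrite abszE ger0_norm.
  have ET : T ^+ 2 = (`|T|%N)%:Z ^+ 2 by rewrite abszE (real_normK (num_real _)).
  have ED : D ^+ 2 = J%:Z ^+ 2 by rewrite -hD (real_normK (num_real _)).
  rewrite {1}En ET ED in id4.
  move: id4; generalize `|n|%N `|T|%N; clear -J0 => nn tt id4.
  lia.
have htn : (`|T| <= `|n|)%N by clear -h1 h2; lia.
have nJ : `|n|%N = J.
  case: hJ => [pJ|[[p [q [pp pq _ hpq EJ]]]|[p [pp op EJ]]]].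
  - apply: (lemP J _ _ pJ heq htn).
  - rewrite EJ in heq *; apply: (lemQ p q _ _ pp pq hpq heq htn).
  - rewrite EJ in heq *; apply: (lem2P p _ _ pp op heq htn).
have nZ : n = J%:Z by rewrite -nJ abszE ger0_norm.
have [r [pr r3 rJ nr2]] : exists r, [/\ prime r, (r %% 3 = 2)%N, (r %| J)%N & ~~ (r ^ 2 %| J)%N].
  exact: choose_r.
by move: (div_sq r J a b pr r3 (etrans (esym En0) nZ) rJ); rewrite (negPf nr2).
Qed.

Definition P {R : realType} (s : R) (a b : int) : R * R := (a%:~R * 1 + b%:~R * - (1 / 2), a%:~R * 0 + b%:~R * (s / 2)).

Lemma sqn {R : realType} (s : R) a b : s ^+ 2 = 3 -> (P s a b).1 ^+ 2 + (P s a b).2 ^+ 2 = (a ^+ 2 - a * b + b ^+ 2)%:~R.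
Proof.
move=> hs; rewrite /P /=.
apply/eqP; rewrite -subr_eq0; apply/eqP.
have -> : (a%:~R * 1 + b%:~R * - (1 / 2)) ^+ 2 + (a%:~R * 0 + b%:~R * (s / 2)) ^+ 2 -
  (a ^+ 2 - a * b + b ^+ 2)%:~R = (b%:~R) ^+ 2 / 4 * (s ^+ 2 - 3) :> R by field.
by rewrite hs subrr mulr0.
Qed.

Lemma Psub {R : realType} (s : R) a b e f : ((P s a b).1 - (P s e f).1, (P s a b).2 - (P s e f).2) = P s (a - e) (b - f).
Proof. by rewrite /P /=; congr pair; ring. Qed.

Lemma lat_self {R : realType} {L : R * R -> Prop} {x y} : is_basis L x y -> L x /\ L y.
Proof.
move=> [_ h]; split; apply/h.
- by exists 1, 0; rewrite [x]surjective_pairing /=; congr pair; ring.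
- by exists 0, 1; rewrite [y]surjective_pairing /=; congr pair; ring.
Qed.

Lemma basis_det (R : realType) (L : R * R -> Prop) u v x y :
  is_basis L u v -> is_basis L x y -> `|det2 x y| = `|det2 u v|.
Proof.
move=> buv bxy.
have [Lu Lv] := lat_self buv; have [Lx Ly] := lat_self bxy.
have [m1 [n1 Ex]] := (proj2 buv x).1 Lx.
have [m2 [n2 Ey]] := (proj2 buv y).1 Ly.
have [k1 [l1 Eu]] := (proj2 bxy u).1 Lu.
have [k2 [l2 Ev]] := (proj2 bxy v).1 Lv.
have d1 : det2 x y = (m1 * n2 - n1 * m2)%:~R * det2 u v.
  by rewrite Ex Ey /det2 /=; ring.
have d2 : det2 u v = (k1 * l2 - l1 * k2)%:~R * det2 x y.
  by rewrite Eu Ev /det2 /=; ring.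
have hxy := proj1 bxy.
have hd : (m1 * n2 - n1 * m2) * (k1 * l2 - l1 * k2) = 1.
  apply/eqP; rewrite -(eqr_int R) -[X in _ == X]/(1%:~R) .
  apply/eqP; apply: (mulIf hxy); rewrite mul1r rmorphM /= -mulrA -d2 -d1 //.
have hn : `|m1 * n2 - n1 * m2| = 1.
  have := congr1 absz hd; rewrite abszM => /eqP; rewrite muln_eq1 => /andP[/eqP h _].
  by rewrite -abszE h.
by rewrite d1 normrM -intr_norm hn mul1r.
Qed.

Local Close Scope ring_scope.

Theorem lemma5p4 (R : realType) (J : nat) :
  (0 < J)%N ->
  ~ special_form J ->
  (prime J \/
   (exists p q : nat, [/\ prime p, prime q, odd p && odd q, (3 * p < q)%N & J = (p * q)%N]) \/
   (exists p : nat, [/\ prime p, odd p & J = (2 * p)%N])) ->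
  forall L : R * R -> Prop,
    sublattice_h L -> has_index_h L J -> ~ well_rounded L.
Proof.
move=> J0 nsp hJ L [_ sub] [u [v [buv hJd]]] [x [y [bxy [nxy hmin]]]].
Local Open Scope ring_scope.
set s : R := Num.sqrt 3.
have hs : s ^+ 2 = 3 by rewrite sqr_sqrtr // ler0n.
have s0 : 0 < s by rewrite sqrtr_gt0 ltr0n.
have [Lx Ly] := lat_self bxy.
have [a [b Ex]] := sub x Lx.
have [e [f Ey]] := sub y Ly.
have Px : x = P s a b by rewrite Ex.
have Py : y = P s e f by rewrite Ey.
have nsq z : vnorm z ^+ 2 = z.1 ^+ 2 + z.2 ^+ 2.
  by rewrite /vnorm sqr_sqrtr // addr_ge0 // sqr_ge0.
have hN : a ^+ 2 - a * b + b ^+ 2 = e ^+ 2 - e * f + f ^+ 2.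
  have := congr1 (fun r => r ^+ 2) nxy; rewrite /= !nsq Px Py !sqn //.
  exact: intr_inj.
have hD : `|a * f - b * e| = J%:Z.
  have dxy : det2 x y = (a * f - b * e)%:~R * (s / 2) by rewrite Px Py /det2 /P /=; ring.
  have dh : det2 (hb1 R) (hb2 R) = s / 2 by rewrite /det2 /hb1 /hb2 /s /=; ring.
  have := @basis_det R L u v x y buv bxy; rewrite hJd dxy dh normrM => /(mulIf _) h.
  have : `|(a * f - b * e)%:~R : R| = J%:R by apply: h; rewrite normr_eq0; lra.
  by rewrite -intr_norm -[J%:R]/((J%:Z)%:~R) => /intr_inj.
have ineq (sg : int) : (sg = 1 \/ sg = -1) ->
    a ^+ 2 - a * b + b ^+ 2 <= (a + sg * e) ^+ 2 - (a + sg * e) * (b + sg * f) + (b + sg * f) ^+ 2.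
  move=> hsg.
  set z := (x.1 + sg%:~R * y.1, x.2 + sg%:~R * y.2).
  have Lz : L z by apply/(proj2 bxy); exists 1, sg; rewrite /z; congr pair; ring.
  have nz : z != (0, 0).
    apply/eqP; rewrite /z => -[e1 e2].
    move: (proj1 bxy); rewrite /det2.
    have -> : x.1 = - sg%:~R * y.1 by rewrite -(subr0 x.1) -e1; ring.
    have -> : x.2 = - sg%:~R * y.2 by rewrite -(subr0 x.2) -e2; ring.
    by move/eqP; apply; ring.
  have := hmin z Lz nz; rewrite /vnorm ler_sqrt ?addr_ge0 ?sqr_ge0 //.
  have -> : z = P s (a + sg * e) (b + sg * f) by rewrite /z Px Py /P /=; congr pair; ring.
  by rewrite Px !sqn // ler_int.
have i1 := ineq (-1) (or_intror erefl).
have i2 := ineq 1 (or_introl erefl).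
have id1 : (a + -1 * e) ^+ 2 - (a + -1 * e) * (b + -1 * f) + (b + -1 * f) ^+ 2 =
  (a ^+ 2 - a * b + b ^+ 2) + (e ^+ 2 - e * f + f ^+ 2) - (2 * a * e - a * f - b * e + 2 * b * f) by ring.
have id2 : (a + 1 * e) ^+ 2 - (a + 1 * e) * (b + 1 * f) + (b + 1 * f) ^+ 2 =
  (a ^+ 2 - a * b + b ^+ 2) + (e ^+ 2 - e * f + f ^+ 2) + (2 * a * e - a * f - b * e + 2 * b * f) by ring.
rewrite id1 -hN in i1; rewrite id2 -hN in i2.
apply: (core J a b e f J0 nsp hJ hN hD).
- move: i1; generalize (a ^+ 2 - a * b + b ^+ 2) (2 * a * e - a * f - b * e + 2 * b * f) => n t; lia.
- move: i2; generalize (a ^+ 2 - a * b + b ^+ 2) (2 * a * e - a * f - b * e + 2 * b * f) => n t; lia.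
Qed.
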